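(* Fix a node $p$ with $N_p\ge1$ neighbors, integers $d\ge1$, $B_p\ge1$, constants $C^R>0$, $\rho>0$, $\eta>0$, a privacy parameter $\alpha>0$, and fixed vectors $\lambda\in\mathbb{R}^d$ and $a_i\in\mathbb{R}^d$ for $i\in\mathcal{N}_p$ (not depending on the dataset; in the algorithm $a_i=\frac12(f_p(t)+V_i(t)-\epsilon_p(t))$). For a dataset $D_p=((x_j,y_j))_{j=1}^{B_p}$ let $$g(D_p)=\arg\min_{f\in\mathbb{R}^d}\ \frac{C^R}{B_p}\sum_{j=1}^{B_p}\mathcal{L}(y_jf^Tx_j)+\rho R(f)+2\lambda^Tf+\eta\sum_{i\in\mathcal{N}_p}\|f-a_i\|^2,$$ and release $V=g(D_p)+\epsilon$, where $\epsilon\in\mathbb{R}^d$ is drawn independently with density proportional to $e^{-\zeta\|\epsilon\|}$, $\zeta=\frac{\rho B_p\alpha}{2C^R}$. Then for any two neighboring datasets $D_p,D_p'$, the densities $Q(\cdot\mid D_p)$, $Q(\cdot\mid D'_p)$ of $V$ satisfy $\frac{Q(v\mid D_p)}{Q(v\mid D_p')}\le e^{\alpha}$ for all $v\in\mathbb{R}^d$.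
   Context: Data points satisfy $x_j\in\mathbb{R}^d$ with $\|x_j\|\le 1$ (Euclidean norm) and $y_j\in\{-1,1\}$. The loss $\mathcal{L}:\mathbb{R}\to\mathbb{R}$ is convex and differentiable with $|\mathcal{L}'|\le1$. The regularizer $R:\mathbb{R}^d\to\mathbb{R}$ is continuously differentiable and 1-strongly convex. Two datasets of the same size $B_p$ are neighboring if they differ in exactly one data point. *)

(* Defs.v *)
From Stdlib Require Import Reals.
From mathcomp Require Import all_boot.
Set Implicit Arguments. Unset Strict Implicit. Unset Printing Implicit Defensive.
Open Scope R_scope.

Definition vec (d : nat) := 'I_d -> R.

Definition vsum (n : nat) (F : 'I_n -> R) : R := \big[Rplus/0]_(i < n) F i.

Definition dot (d : nat) (u v : vec d) : R := vsum (fun i => u i * v i).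
Definition vnorm (d : nat) (u : vec d) : R := sqrt (dot u u).
Definition vadd (d : nat) (u v : vec d) : vec d := fun i => u i + v i.
Definition vsub (d : nat) (u v : vec d) : vec d := fun i => u i - v i.
Definition vscale (d : nat) (c : R) (u : vec d) : vec d := fun i => c * u i.

Definition convex_fun (L : R -> R) : Prop :=
  forall x y t, 0 <= t <= 1 -> L (t * x + (1 - t) * y) <= t * L x + (1 - t) * L y.

Definition diff_deriv_bounded (L : R -> R) : Prop :=
  forall x, exists l, derivable_pt_lim L x l /\ Rabs l <= 1.

Definition has_gradient (d : nat) (F : vec d -> R) (G : vec d -> vec d) : Prop :=
  forall x eps, 0 < eps -> exists delta, 0 < delta /\
    forall h : vec d, vnorm h < delta ->
      Rabs (F (vadd x h) - F x - dot (G x) h) <= eps * vnorm h.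

Definition vcontinuous (d : nat) (G : vec d -> vec d) : Prop :=
  forall x eps, 0 < eps -> exists delta, 0 < delta /\
    forall y : vec d, vnorm (vsub y x) < delta -> vnorm (vsub (G y) (G x)) < eps.

Definition continuously_differentiable (d : nat) (F : vec d -> R) : Prop :=
  exists G, has_gradient F G /\ vcontinuous G.

Definition strongly_convex1 (d : nat) (F : vec d -> R) : Prop :=
  forall x y t, 0 <= t <= 1 ->
    F (vadd (vscale t x) (vscale (1 - t) y))
      <= t * F x + (1 - t) * F y - t * (1 - t) / 2 * (vnorm (vsub x y)) ^ 2.

Record dataset (d Bp : nat) := Dataset { dx : 'I_Bp -> vec d; dy : 'I_Bp -> R }.

Definition valid_dataset (d Bp : nat) (D : dataset d Bp) : Prop :=
  forall j, vnorm (dx D j) <= 1 /\ (dy D j = 1 \/ dy D j = -1).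

Definition neighboring (d Bp : nat) (D D' : dataset d Bp) : Prop :=
  exists k : 'I_Bp,
    (dx D k, dy D k) <> (dx D' k, dy D' k) /\
    forall j : 'I_Bp, j <> k -> dx D j = dx D' j /\ dy D j = dy D' j.

Definition objective (d Bp Np : nat) (L : R -> R) (Reg : vec d -> R)
    (CR rho eta : R) (lam : vec d) (a : 'I_Np -> vec d) (D : dataset d Bp)
    (f : vec d) : R :=
  CR / INR Bp * vsum (fun j => L (dy D j * dot f (dx D j)))
  + rho * Reg f + 2 * dot lam f
  + eta * vsum (fun i => (vnorm (vsub f (a i))) ^ 2).

Definition is_argmin (d : nat) (J : vec d -> R) (f : vec d) : Prop :=
  forall h, J f <= J h.

(* density of V = c + eps where eps has density K * exp(-zeta ||eps||),
   K being the (dataset-independent) normalizing constant *)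
Definition laplace_density (d : nat) (K zeta : R) (c v : vec d) : R :=
  K * exp (- zeta * vnorm (vsub v c)).

(* Main.v *)
Require Import Defs.
From Stdlib Require Import Reals Lra Psatz ClassicalEpsilon.
From mathcomp Require Import all_boot.
From mathcomp Require Import Rstruct.
Open Scope R_scope.

Module Helpers.
Set Implicit Arguments. Unset Strict Implicit.

Lemma vsum_add n (F G : 'I_n -> R) : vsum (fun i => F i + G i) = vsum F + vsum G.
Proof. by rewrite /vsum big_split. Qed.

Lemma vsum_scal n c (F : 'I_n -> R) : vsum (fun i => c * F i) = c * vsum F.
Proof. rewrite /vsum; elim/big_rec2: _ => [|i x y _ ->]; lra. Qed.

Lemma vsum_le n (F G : 'I_n -> R) : (forall i, F i <= G i) -> vsum F <= vsum G.
Proof. move=> H; rewrite /vsum; elim/big_rec2: _ => [|i x y _ Hy]; [lra|]. have := H i; lra. Qed.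

Lemma vsum_ext n (F G : 'I_n -> R) : (forall i, F i = G i) -> vsum F = vsum G.
Proof. move=> H; rewrite /vsum; apply: eq_bigr => i _; exact: H. Qed.

Lemma vsum_single n (F : 'I_n -> R) k : (forall j, j <> k -> F j = 0) -> vsum F = F k.
Proof.
move=> H; rewrite /vsum (bigD1 k) //= big1; first lra.
move=> j /eqP Hj; exact: H.
Qed.

Lemma dot_nonneg d (u : vec d) : 0 <= dot u u.
Proof. rewrite /dot /vsum; elim/big_rec: _ => [|i x _ Hx]; [lra|]. nra. Qed.

Lemma vnorm_sq d (u : vec d) : vnorm u ^ 2 = dot u u.
Proof. rewrite /vnorm /= Rmult_1_r sqrt_sqrt //; exact: dot_nonneg. Qed.

Lemma vnorm_ge0 d (u : vec d) : 0 <= vnorm u.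
Proof. exact: sqrt_pos. Qed.

Lemma dot_sub_l d (u w x : vec d) : dot (vsub u w) x = dot u x - dot w x.
Proof.
rewrite /dot; have -> : forall a b : R, a - b = a + (-1) * b by move=> *; ring.
rewrite -vsum_scal -vsum_add; apply: vsum_ext => i; rewrite /vsub; ring.
Qed.

Lemma dot_comb d t s (x y w : vec d) :
  dot (vadd (vscale t x) (vscale s y)) w = t * dot x w + s * dot y w.
Proof.
rewrite /dot -!vsum_scal -vsum_add; apply: vsum_ext => i; rewrite /vadd /vscale; ring.
Qed.

Lemma dot_sym d (u v : vec d) : dot u v = dot v u.
Proof. apply: vsum_ext => i; ring. Qed.

Lemma CS2 d (u v : vec d) : (dot u v)^2 <= dot u u * dot v v.
Proof.
have H : forall t, 0 <= dot u u + 2 * t * dot u v + t^2 * dot v v.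
  move=> t.
  have -> : dot u u + 2 * t * dot u v + t^2 * dot v v =
    dot (fun i => u i + t * v i) (fun i => u i + t * v i).
    rewrite /dot -!vsum_scal -!vsum_add; apply: vsum_ext => i; ring.
  exact: dot_nonneg.
have HA := dot_nonneg u; have HB := dot_nonneg v.
case: (Rle_lt_or_eq_dec 0 (dot v v) HB) => HB'.
  have := H (- dot u v / dot v v).
  have -> : dot u u + 2 * (- dot u v / dot v v) * dot u v + (- dot u v / dot v v)^2 * dot v v
    = dot u u - (dot u v)^2 / dot v v by field; lra.
  move=> Ht.
  have : 0 <= (dot u u - (dot u v)^2 / dot v v) * dot v v by nra.
  have -> : (dot u u - (dot u v)^2 / dot v v) * dot v v = dot u u * dot v v - (dot u v)^2
    by field; lra.
  lra.
rewrite -HB'.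
case: (Req_dec (dot u v) 0) => HC; first by rewrite HC; nra.
have := H (- (dot u u + 1) / (2 * dot u v)); rewrite -HB'.
have -> : dot u u + 2 * (- (dot u u + 1) / (2 * dot u v)) * dot u v + (- (dot u u + 1) / (2 * dot u v))^2 * 0 = -1
  by field.
lra.
Qed.

Lemma CS d (u v : vec d) : Rabs (dot u v) <= vnorm u * vnorm v.
Proof.
rewrite /vnorm -sqrt_mult; try exact: dot_nonneg.
rewrite -sqrt_Rsqr_abs; apply: sqrt_le_1_alt.
have := CS2 u v; rewrite /Rsqr; lra.
Qed.

Lemma vnorm_triangle d (u w : vec d) : vnorm (vadd u w) <= vnorm u + vnorm w.
Proof.
have Hu := vnorm_ge0 u; have Hw := vnorm_ge0 w; have Huw := vnorm_ge0 (vadd u w).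
apply: Rsqr_incr_0_var; last nra.
rewrite /Rsqr.
have E : vnorm (vadd u w) ^2 = vnorm u ^2 + 2 * dot u w + vnorm w ^2.
  rewrite !vnorm_sq /dot -!vsum_scal -!vsum_add; apply: vsum_ext => i; rewrite /vadd; ring.
have C := CS u w; have := Rle_abs (dot u w).
move: E => /=; rewrite !Rmult_1_r => E; nra.
Qed.

Lemma L_lip (L : R -> R) : diff_deriv_bounded L ->
  forall a b, Rabs (L b - L a) <= Rabs (b - a).
Proof.
move=> H a b.
pose f' x := proj1_sig (constructive_indefinite_description _ (H x)).
have Hf : forall x, derivable_pt_lim L x (f' x) /\ Rabs (f' x) <= 1.
  move=> x; exact: (proj2_sig (constructive_indefinite_description _ (H x))).
have [c [E _]] := MVT_abs L f' a b (fun c _ => proj1 (Hf c)).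
rewrite E; have := proj2 (Hf c); have := Rabs_pos (b - a); have := Rabs_pos (f' c); nra.
Qed.

Definition comb d t (x y : vec d) := vadd (vscale t x) (vscale (1 - t) y).

Lemma qgrowth d (J : vec d -> R) mu g h t :
  (forall x y t, 0 <= t <= 1 ->
     J (comb t x y) <= t * J x + (1 - t) * J y - mu * (t * (1 - t) / 2 * vnorm (vsub x y) ^ 2)) ->
  is_argmin J g -> 0 < t <= 1 ->
  mu * ((1 - t) / 2 * vnorm (vsub h g) ^ 2) <= J h - J g.
Proof.
move=> Hsc Hg Ht.
have H1 := Hsc h g t (conj (Rlt_le _ _ (proj1 Ht)) (proj2 Ht)).
have H2 := Hg (comb t h g).
apply: (Rmult_le_reg_l t); first lra.
have -> : t * (mu * ((1 - t) / 2 * vnorm (vsub h g) ^ 2)) =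
  mu * (t * (1 - t) / 2 * vnorm (vsub h g) ^ 2) by field.
lra.
Qed.

Lemma obj_sc d Bp Np (L : R -> R) (Reg : vec d -> R) CR rho eta (lam : vec d)
  (a : 'I_Np -> vec d) (D : dataset d Bp) :
  0 < CR -> 0 < rho -> 0 < eta -> convex_fun L -> strongly_convex1 Reg ->
  forall x y t, 0 <= t <= 1 ->
   objective L Reg CR rho eta lam a D (comb t x y) <=
   t * objective L Reg CR rho eta lam a D x + (1 - t) * objective L Reg CR rho eta lam a D y
   - rho * (t * (1 - t) / 2 * vnorm (vsub x y) ^ 2).
Proof.
move=> hCR hrho heta hL hR x y t Ht.
rewrite /objective.
have T1 : vsum (fun j => L (dy D j * dot (comb t x y) (dx D j))) <=
   t * vsum (fun j => L (dy D j * dot x (dx D j))) + (1 - t) * vsum (fun j => L (dy D j * dot y (dx D j))).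
  rewrite -!vsum_scal -vsum_add; apply: vsum_le => j.
  rewrite /comb dot_comb.
  have -> : dy D j * (t * dot x (dx D j) + (1 - t) * dot y (dx D j)) =
     t * (dy D j * dot x (dx D j)) + (1 - t) * (dy D j * dot y (dx D j)) by ring.
  exact: hL.
have T2 := hR x y t Ht.
have T3 : dot lam (comb t x y) = t * dot lam x + (1 - t) * dot lam y.
  by rewrite /comb (dot_sym lam) dot_comb (dot_sym x lam) (dot_sym y lam).
have T4 : vsum (fun i => vnorm (vsub (comb t x y) (a i)) ^ 2) <=
   t * vsum (fun i => vnorm (vsub x (a i)) ^ 2) + (1 - t) * vsum (fun i => vnorm (vsub y (a i)) ^ 2).
  rewrite -!vsum_scal -vsum_add; apply: vsum_le => i.
  rewrite !vnorm_sq /dot -!vsum_scal -vsum_add; apply: vsum_le => k.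
  rewrite /vsub /comb /vadd /vscale.
  have h1 : 0 <= t * (1 - t) by case: Ht => ? ?; apply: Rmult_le_pos; lra.
  have h2 : 0 <= (x k - y k) * (x k - y k) by apply: Rle_0_sqr.
  have := Rmult_le_pos _ _ h1 h2.
  nra.
have HB : 0 <= CR / INR Bp.
  apply: Rmult_le_pos; first lra.
  case: (Req_dec (INR Bp) 0) => [->|h]; first by rewrite Rinv_0; lra.
  apply: Rlt_le; apply: Rinv_0_lt_compat; have := pos_INR Bp; lra.
rewrite T3.
have := Rmult_le_compat_l _ _ _ HB T1.
have := Rmult_le_compat_l _ _ _ (Rlt_le _ _ heta) T4.
have := Rmult_le_compat_l _ _ _ (Rlt_le _ _ hrho) T2.
rewrite /comb.
nra.
Qed.

Lemma vnorm_ext d (u w : vec d) : (forall i, u i = w i) -> vnorm u = vnorm w.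
Proof. move=> H; rewrite /vnorm /dot; congr sqrt; apply: vsum_ext => i; by rewrite H. Qed.

Lemma vnorm_sub_sym d (u w : vec d) : vnorm (vsub u w) = vnorm (vsub w u).
Proof. rewrite /vnorm /dot; congr sqrt; apply: vsum_ext => i; rewrite /vsub; ring. Qed.

Lemma bound_from_all (rho M n : R) : 0 < rho -> 0 <= M -> 0 <= n ->
  (forall t, 0 < t <= 1 -> rho * ((1 - t) / 2 * n ^ 2) + rho * ((1 - t) / 2 * n ^ 2) <= M * n) ->
  n <= M / rho.
Proof.
move=> hr hM hn H.
apply: Rnot_lt_le => Hc.
have hMr : 0 <= M / rho by apply: Rmult_le_pos; [lra | apply: Rlt_le; apply: Rinv_0_lt_compat].
have npos : 0 < n by lra.
set q := M / (rho * n).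
have hq0 : 0 <= q by rewrite /q; apply: Rmult_le_pos; [lra| apply: Rlt_le; apply: Rinv_0_lt_compat; nra].
have hq1 : q < 1.
  rewrite /q; apply: (Rmult_lt_reg_r (rho * n)); first nra.
  rewrite /Rdiv Rmult_assoc Rinv_l; last nra.
  have : M / rho * rho < n * rho by apply: Rmult_lt_compat_r.
  rewrite /Rdiv Rmult_assoc Rinv_l; lra.
have Hq : M = q * rho * n by rewrite /q; field; nra.
have := H ((1 - q) / 2) ltac:(lra).
rewrite Hq /=.
have h2 : 0 < rho * (n * n) by apply: Rmult_lt_0_compat => //; apply: Rmult_lt_0_compat.
move=> Hf.
have : rho * (n * n) * (1 - q) <= 0 by nra.
have := Rmult_lt_0_compat _ _ h2 (ltac:(lra) : 0 < 1 - q).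
lra.
Qed.
End Helpers.
Import Helpers.

Theorem theorem2 (d Bp Np : nat) (L : R -> R) (Reg : vec d -> R)
    (CR rho eta alpha : R) (lam : vec d) (a : 'I_Np -> vec d) (K : R)
    (hd : (1 <= d)%nat) (hBp : (1 <= Bp)%nat) (hNp : (1 <= Np)%nat)
    (hCR : 0 < CR) (hrho : 0 < rho) (heta : 0 < eta) (halpha : 0 < alpha)
    (hLconv : convex_fun L) (hLdiff : diff_deriv_bounded L)
    (hRC1 : continuously_differentiable Reg) (hRsc : strongly_convex1 Reg)
    (hK : 0 < K)
    (D D' : dataset d Bp) (hD : valid_dataset D) (hD' : valid_dataset D')
    (hneigh : neighboring D D')
    (g g' : vec d)
    (hg : is_argmin (objective L Reg CR rho eta lam a D) g)
    (hg' : is_argmin (objective L Reg CR rho eta lam a D') g') :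
  let zeta := rho * INR Bp * alpha / (2 * CR) in
  forall v : vec d,
    laplace_density K zeta g v / laplace_density K zeta g' v <= exp alpha.
Proof.
move=> zeta v.
have hB1 : 1 <= INR Bp by move/leP: hBp => h; have := le_INR _ _ h.
set J := objective L Reg CR rho eta lam a D.
set J' := objective L Reg CR rho eta lam a D'.
have [k [_ hk]] := hneigh.
have Hdiff : forall f, J f - J' f =
   CR / INR Bp * (L (dy D k * dot f (dx D k)) - L (dy D' k * dot f (dx D' k))).
  move=> f; rewrite /J /J' /objective.
  have -> : vsum (fun j => L (dy D j * dot f (dx D j))) =
     vsum (fun j => L (dy D j * dot f (dx D j)) - L (dy D' j * dot f (dx D' j)))
     + vsum (fun j => L (dy D' j * dot f (dx D' j))).
    rewrite -vsum_add; apply: vsum_ext => j; ring.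
  rewrite (vsum_single (k := k)); first ring.
  move=> j hj; have [-> ->] := hk j hj; ring.
set n := vnorm (vsub g' g).
have hn0 : 0 <= n by apply: vnorm_ge0.
have Hlipk : forall (E : dataset d Bp), valid_dataset E ->
   Rabs (L (dy E k * dot g' (dx E k)) - L (dy E k * dot g (dx E k))) <= n.
  move=> E hE.
  apply: Rle_trans; first exact: L_lip.
  have -> : dy E k * dot g' (dx E k) - dy E k * dot g (dx E k) = dy E k * dot (vsub g' g) (dx E k)
    by rewrite dot_sub_l; ring.
  rewrite Rabs_mult.
  have [hx hy] := hE k.
  have hy1 : Rabs (dy E k) = 1 by case: hy => ->; [rewrite Rabs_pos_eq | rewrite Rabs_left]; lra.
  rewrite hy1 Rmult_1_l.
  apply: Rle_trans; first exact: CS.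
  rewrite -/n; have := vnorm_ge0 (dx E k); nra.
have HB : 0 < CR / INR Bp by apply: Rdiv_lt_0_compat; lra.
have Hbound : n <= (2 * (CR / INR Bp)) / rho.
  apply: bound_from_all => //; first lra.
  move=> t ht.
  have G1 := qgrowth g' (obj_sc lam a D hCR hrho heta hLconv hRsc) hg ht.
  have G2 := qgrowth g (obj_sc lam a D' hCR hrho heta hLconv hRsc) hg' ht.
  rewrite vnorm_sub_sym -/n in G2.
  rewrite -/J in G1; rewrite -/J' in G2.
  have E : J g' - J g + (J' g - J' g') = (J g' - J' g') - (J g - J' g) by ring.
  have := Hdiff g'; have := Hdiff g.
  have L1 := Hlipk D hD; have L2 := Hlipk D' hD'.
  move=> H1 H2.
  have : (J g' - J' g') - (J g - J' g) =
    CR / INR Bp * ((L (dy D k * dot g' (dx D k)) - L (dy D k * dot g (dx D k)))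
                   - (L (dy D' k * dot g' (dx D' k)) - L (dy D' k * dot g (dx D' k)))).
    rewrite H1 H2; ring.
  move=> H3.
  set X := L (dy D k * dot g' (dx D k)) - L (dy D k * dot g (dx D k)) in H3 L1.
  set Y := L (dy D' k * dot g' (dx D' k)) - L (dy D' k * dot g (dx D' k)) in H3 L2.
  have A1 := Rle_abs X.
  have A2 := Rle_abs (- Y); rewrite Rabs_Ropp in A2.
  have A3 : CR / INR Bp * (X - Y) <= CR / INR Bp * (2 * n) by apply: Rmult_le_compat_l; lra.
  rewrite -/n in G1. lra.
have Hexp : forall x y, x <= y -> exp x <= exp y.
  move=> x y hxy; case: (Rle_lt_or_eq_dec _ _ hxy) => h.
    by apply: Rlt_le; apply: exp_increasing.
  by rewrite h; apply: Rle_refl.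
rewrite /laplace_density.
set A := vnorm (vsub v g); set Bn := vnorm (vsub v g').
have E : exp (zeta * (Bn - A)) * exp (- zeta * Bn) = exp (- zeta * A).
  rewrite -exp_plus; f_equal; ring.
have -> : K * exp (- zeta * A) / (K * exp (- zeta * Bn)) = exp (zeta * (Bn - A)).
  rewrite -E; field; split; [apply: Rgt_not_eq; apply: exp_pos | lra].
apply: Hexp.
have hz : 0 <= zeta.
  rewrite /zeta; apply: Rmult_le_pos; last by apply: Rlt_le; apply: Rinv_0_lt_compat; lra.
  apply: Rmult_le_pos; [apply: Rmult_le_pos|]; lra.
have HBA : Bn <= A + n.
  have -> : Bn = vnorm (vadd (vsub v g) (vsub g g')).
    apply: vnorm_ext => i; rewrite /vadd /vsub; ring.
  rewrite /n vnorm_sub_sym; exact: vnorm_triangle.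
have Hzn : zeta * n <= alpha.
  apply: Rle_trans; first exact: (Rmult_le_compat_l _ _ _ hz Hbound).
  rewrite /zeta; apply: Req_le; field; lra.
have := Rmult_le_compat_l _ _ _ hz HBA.
lra.
Qed.
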